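(* Let $\mathbf{u}$ be quasi-definite with SMOP $(P_n)_{n\ge0}$ satisfying $xP_n=P_{n+1}+b_nP_n+a_nP_{n-1}$, let $c\in\mathbb{C}$, and let $\widehat{\mathbf{u}}$ be a quasi-definite linear functional with $\mathbf{u}=(x-c)^2\widehat{\mathbf{u}}$ and SMOP $(Q_n)_{n\ge0}$. Write $Q_n=P_n+\sum_{m=0}^{n-1}\alpha_{n,m}P_m$ (then $\alpha_{n,m}=0$ for $m\le n-3$ and $\alpha_{n,n-2}\ne0$ for $n\ge2$), with the convention $\alpha_{0,-1}=0$. Then $(Q_n)$ satisfies $xQ_n=Q_{n+1}+\widehat b_nQ_n+\widehat a_nQ_{n-1}$, $Q_{-1}=0$, $Q_0=1$, where $$\widehat b_n=b_n+\alpha_{n,n-1}-\alpha_{n+1,n}\ (n\ge0),\qquad \widehat a_n=\frac{\alpha_{n,n-2}}{\alpha_{n-1,n-3}}\,a_{n-2}\ (n\ge3),$$ $$\widehat a_2=\frac{\mathbf{u}_0\widehat{\mathbf{u}}_0\,\alpha_{2,0}}{\mathbf{u}_0\widehat{\mathbf{u}}_0-(\widehat{\mathbf{u}}_1-c\widehat{\mathbf{u}}_0)^2},\qquad \widehat a_1=\frac{\mathbf{u}_0\widehat{\mathbf{u}}_0-(\widehat{\mathbf{u}}_1-c\widehat{\mathbf{u}}_0)^2}{\widehat{\mathbf{u}}_0^2}.$$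
   Context: Linear functionals on complex polynomials, moments $\mathbf{u}_n=\langle\mathbf{u},x^n\rangle$, $\langle(x-c)^2\widehat{\mathbf{u}},p\rangle=\langle\widehat{\mathbf{u}},(x-c)^2p\rangle$. Quasi-definite: all leading principal submatrices of the Hankel moment matrix are nonsingular; then there is a unique sequence of monic orthogonal polynomials (SMOP) $(P_n)$, $\deg P_n=n$, $\langle\mathbf{u},P_nP_m\rangle=K_n\delta_{nm}$, $K_n\neq0$, satisfying a three-term recurrence $xP_n=P_{n+1}+b_nP_n+a_nP_{n-1}$, $P_{-1}=0,P_0=1$, $a_n\ne0$. *)

(* Defs.v *)
From HB Require Import structures.
From mathcomp Require Import all_boot all_order all_algebra.
From mathcomp Require Import complex.
From mathcomp Require Import reals.
Set Implicit Arguments. Unset Strict Implicit. Unset Printing Implicit Defensive.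
Import Order.TTheory GRing.Theory Num.Theory.
Local Open Scope ring_scope.

(* A linear functional on polynomials over a field C, given by its moment
   sequence m : <m, x^n> = m n, extended linearly. *)
Definition lfun (C : fieldType) (m : nat -> C) (p : {poly C}) : C :=
  \sum_(i < size p) p`_i * m i.

Definition hankel (C : fieldType) (m : nat -> C) (n : nat) : 'M[C]_n.+1 :=
  \matrix_(i < n.+1, j < n.+1) m (i + j)%N.

Definition quasi_definite (C : fieldType) (m : nat -> C) : Prop :=
  forall n : nat, \det (hankel m n) != 0.

Definition is_SMOP (C : fieldType) (m : nat -> C) (P : nat -> {poly C}) : Prop :=
  (forall n, P n \is monic) /\ (forall n, size (P n) = n.+1) /\
  (forall n k, n != k -> lfun m (P n * P k) = 0) /\
  (forall n, lfun m (P n * P n) != 0).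

Definition prevP (C : fieldType) (P : nat -> {poly C}) (n : nat) : {poly C} :=
  if n is k.+1 then P k else 0.

Definition hat_b (C : fieldType) (b : nat -> C) (alpha : nat -> nat -> C)
    (n : nat) : C :=
  b n + (if n is k.+1 then alpha n k else 0) - alpha n.+1 n.

(* hat a_n ; the value at n = 0 is irrelevant (it multiplies Q_{-1} = 0) *)
Definition hat_a (C : fieldType) (u uh : nat -> C) (c : C) (a : nat -> C)
    (alpha : nat -> nat -> C) (n : nat) : C :=
  let D := u 0%N * uh 0%N - (uh 1%N - c * uh 0%N) ^+ 2 in
  match n with
  | 0 => 0
  | 1 => D / (uh 0%N) ^+ 2
  | 2 => u 0%N * uh 0%N * alpha 2%N 0%N / D
  | k.+3 => alpha k.+3 k.+1 / alpha k.+2 k * a k.+1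
  end.

(* Main.v *)
From HB Require Import structures.
From mathcomp Require Import all_boot all_order all_algebra.
From mathcomp Require Import complex.
From mathcomp Require Import reals.
From mathcomp Require Import ring zify.
Require Import Defs.
Set Implicit Arguments. Unset Strict Implicit. Unset Printing Implicit Defensive.
Import Order.TTheory GRing.Theory Num.Theory.
Local Open Scope ring_scope.

Lemma lfunE (C : fieldType) (m : nat -> C) (p : {poly C}) n :
  (size p <= n)%N -> lfun m p = \sum_(i < n) p`_i * m i.
Proof.
move=> hn; rewrite /lfun (big_ord_widen _ (fun i => p`_i * m i) hn).
rewrite big_mkcond /=; apply: eq_bigr => i _.
case: ifP => // /negbT; rewrite -leqNgt => h.
by rewrite nth_default // mul0r.
Qed.

Lemma lfunD (C : fieldType) (m : nat -> C) (p q : {poly C}) :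
  lfun m (p + q) = lfun m p + lfun m q.
Proof.
pose n := maxn (size p) (size q).
rewrite (@lfunE _ m (p + q) n) ?size_polyD //.
rewrite (@lfunE _ m p n) ?leq_maxl // (@lfunE _ m q n) ?leq_maxr //.
by rewrite -big_split; apply: eq_bigr => i _; rewrite coefD mulrDl.
Qed.

Lemma lfunZ (C : fieldType) (m : nat -> C) (k : C) (p : {poly C}) :
  lfun m (k *: p) = k * lfun m p.
Proof.
rewrite (@lfunE _ m (k *: p) (size p)) ?size_scale_leq // /lfun mulr_sumr.
by apply: eq_bigr => i _; rewrite coefZ mulrA.
Qed.

Lemma lfun0 (C : fieldType) (m : nat -> C) : lfun m 0 = 0.
Proof. by rewrite /lfun size_poly0 big_ord0. Qed.

Lemma lfunN (C : fieldType) (m : nat -> C) (p : {poly C}) :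
  lfun m (- p) = - lfun m p.
Proof. by rewrite -scaleN1r lfunZ mulN1r. Qed.

Lemma lfunB (C : fieldType) (m : nat -> C) (p q : {poly C}) :
  lfun m (p - q) = lfun m p - lfun m q.
Proof. by rewrite lfunD lfunN. Qed.

Lemma lfunCM (C : fieldType) (m : nat -> C) (k : C) (p : {poly C}) :
  lfun m (k%:P * p) = k * lfun m p.
Proof. by rewrite mul_polyC lfunZ. Qed.

Lemma lfun_sum (C : fieldType) (m : nat -> C) N (F : 'I_N -> {poly C}) :
  lfun m (\sum_(i < N) F i) = \sum_(i < N) lfun m (F i).
Proof.
by rewrite (big_morph (lfun m) (lfunD m) (lfun0 m)).
Qed.

Lemma lfunXn (C : fieldType) (m : nat -> C) k : lfun m 'X^k = m k.
Proof.
rewrite /lfun size_polyXn big_ord_recr /= coefXn eqxx mul1r big1 ?add0r //.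
by move=> i _; rewrite coefXn /= (ltn_eqF (ltn_ord i)) mul0r.
Qed.

Lemma lfunX (C : fieldType) (m : nat -> C) : lfun m 'X = m 1%N.
Proof. by rewrite -lfunXn expr1. Qed.

Lemma lfun1 (C : fieldType) (m : nat -> C) : lfun m 1 = m 0%N.
Proof. by rewrite -lfunXn expr0. Qed.

Lemma size_drop_top (C : fieldType) (p : {poly C}) n :
  (size p <= n.+1)%N -> p`_n = 0 -> (size p <= n)%N.
Proof.
move=> h1 h2; rewrite leqNgt; apply/negP=> h3.
have e : size p = n.+1 by apply/eqP; rewrite eqn_leq h1 h3.
have : lead_coef p = 0 by rewrite lead_coefE e.
move/eqP; rewrite lead_coef_eq0 => /eqP p0; move: e; by rewrite p0 size_poly0.
Qed.

Lemma coef_top (C : fieldType) (p : {poly C}) n :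
  p \is monic -> size p = n.+1 -> p`_n = 1.
Proof. by move=> /monicP; rewrite lead_coefE => <- ->. Qed.

Lemma size_sub_top (C : fieldType) (P : nat -> {poly C}) :
  (forall n, P n \is monic) -> (forall n, size (P n) = n.+1) ->
  forall n (p : {poly C}), (size p <= n.+1)%N -> (size (p - p`_n *: P n)%R <= n)%N.
Proof.
move=> hm hs n p hp; apply: size_drop_top.
  rewrite (leq_trans (size_polyD _ _)) // geq_max hp size_polyN.
  by rewrite (leq_trans (size_scale_leq _ _)) // hs.
by rewrite coefB coefZ (coef_top (hm n) (hs n)) mulr1 subrr.
Qed.

Lemma expand (C : fieldType) (P : nat -> {poly C}) :
  (forall n, P n \is monic) -> (forall n, size (P n) = n.+1) ->
  forall n (p : {poly C}), (size p <= n)%N ->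
  exists c : nat -> C, p = \sum_(k < n) c k *: P k.
Proof.
move=> hm hs; elim=> [|n IH] p hp.
  exists (fun _ => 0); rewrite big_ord0; apply/eqP.
  by rewrite -size_poly_eq0 -leqn0.
have [c hc] := IH _ (size_sub_top hm hs hp).
exists (fun k => if k == n then p`_n else c k).
rewrite big_ord_recr /= eqxx -[p in LHS](subrK (p`_n *: P n)) hc; congr (_ + _).
by apply: eq_bigr => i _; rewrite (ltn_eqF (ltn_ord i)).
Qed.

Lemma lfun_ortho_sum (C : fieldType) (m : nat -> C) (P : nat -> {poly C}) :
  (forall n k, n != k -> lfun m (P n * P k) = 0) ->
  forall j N (c : nat -> C),
  lfun m (P j * \sum_(k < N) c k *: P k) =
    if (j < N)%N then c j * lfun m (P j * P j) else 0.
Proof.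
move=> hort j N c; rewrite mulr_sumr lfun_sum.
under eq_bigr => k _ do rewrite -scalerAr lfunZ.
case: ifP => hj.
  rewrite (bigD1 (Ordinal hj)) //= big1 ?addr0 // => k hk.
  rewrite hort ?mulr0 //; apply/eqP => e; move/eqP: hk; apply.
  by apply: val_inj; rewrite /= e.
rewrite big1 // => k _; rewrite hort ?mulr0 //; apply/eqP => e.
by move: hj; rewrite e ltn_ord.
Qed.

Lemma ortho_low (C : fieldType) (m : nat -> C) (P : nat -> {poly C}) :
  (forall n, P n \is monic) -> (forall n, size (P n) = n.+1) ->
  (forall n k, n != k -> lfun m (P n * P k) = 0) ->
  forall n (p : {poly C}), (size p <= n)%N -> lfun m (P n * p) = 0.
Proof.
move=> hm hs hort n p hp; have [c ->] := expand hm hs hp.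
by rewrite lfun_ortho_sum // ltnn.
Qed.

Lemma ortho_lead (C : fieldType) (m : nat -> C) (P : nat -> {poly C}) :
  (forall n, P n \is monic) -> (forall n, size (P n) = n.+1) ->
  (forall n k, n != k -> lfun m (P n * P k) = 0) ->
  forall n (p : {poly C}), (size p <= n.+1)%N ->
  lfun m (P n * p) = p`_n * lfun m (P n * P n).
Proof.
move=> hm hs hort n p hp.
have e : p = (p - p`_n *: P n) + p`_n *: P n by rewrite subrK.
rewrite {1}e mulrDr lfunD (ortho_low hm hs hort (size_sub_top hm hs hp)).
by rewrite add0r -scalerAr lfunZ.
Qed.

Lemma ortho_unique (C : fieldType) (m : nat -> C) (P : nat -> {poly C}) :
  (forall n, P n \is monic) -> (forall n, size (P n) = n.+1) ->
  (forall n k, n != k -> lfun m (P n * P k) = 0) ->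
  (forall n, lfun m (P n * P n) != 0) ->
  forall N (p : {poly C}), (size p <= N)%N ->
  (forall j, (j < N)%N -> lfun m (P j * p) = 0) -> p = 0.
Proof.
move=> hm hs hort hK N p hp h.
have [c hc] := expand hm hs hp.
have cj : forall j, (j < N)%N -> c j = 0.
  move=> j hj; move: (h j hj); rewrite hc lfun_ortho_sum // hj.
  by move/eqP; rewrite mulf_eq0 (negbTE (hK j)) orbF => /eqP.
by rewrite hc big1 // => k _; rewrite cj // scale0r.
Qed.

Lemma lfunC (C : fieldType) (m : nat -> C) (k : C) : lfun m k%:P = k * m 0%N.
Proof. by rewrite -(mulr1 k%:P) lfunCM lfun1. Qed.

Lemma sizeXM (C : fieldType) (p : {poly C}) : p != 0 -> size ('X * p) = (size p).+1.
Proof. by move=> hp; rewrite size_mul ?polyX_eq0 // size_polyX. Qed.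

Theorem mainTheorem4 (R : realType) (u uh : nat -> R[i]) (c : R[i])
  (P Q : nat -> {poly R[i]}) (a b : nat -> R[i]) (alpha : nat -> nat -> R[i]) :
  quasi_definite u -> is_SMOP u P ->
  (forall n, 'X * P n = P n.+1 + b n *: P n + a n *: prevP P n) ->
  (forall n, (1 <= n)%N -> a n != 0) ->
  quasi_definite uh -> is_SMOP uh Q ->
  (forall p, lfun u p = lfun uh (('X - c%:P) ^+ 2 * p)) ->
  (forall n, Q n = P n + \sum_(m < n) alpha n m *: P m) ->
  [/\ (forall n m, (m + 3 <= n)%N -> alpha n m = 0),
      (forall n, (2 <= n)%N -> alpha n (n - 2)%N != 0),
      Q 0%N = 1 &
      (forall n, 'X * Q n =
         Q n.+1 + hat_b b alpha n *: Q n + hat_a u uh c a alpha n *: prevP Q n)].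
Proof.
move=> _ [hmP [hsP [hoP hKP]]] recP _ _ [hmQ [hsQ [hoQ hKQ]]] hu hQ.
have P0 : P 0%N = 1.
  by rewrite (size1_polyC (eq_leq (hsP 0%N))) (coef_top (hmP 0%N) (hsP 0%N)).
have Q0 : Q 0%N = 1 by rewrite hQ big_ord0 addr0 P0.
have Qu : forall n m, (m < n)%N -> lfun u (Q n * P m) = alpha n m * lfun u (P m * P m).
  move=> n m hmn; have ne : m != n by rewrite neq_ltn hmn.
  by rewrite mulrC hQ mulrDr lfunD (hoP _ _ ne) (lfun_ortho_sum hoP) hmn add0r.
have Qh : forall n p, lfun u (Q n * p) = lfun uh (Q n * (('X - c%:P)^+2 * p)).
  by move=> n p; rewrite hu mulrCA.
have hmon : forall m, ('X - c%:P)^+2 * P m \is monic.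
  by move=> m; rewrite monicMl ?hmP // monic_exp // monicXsubC.
have hsz : forall m, size (('X - c%:P)^+2 * P m) = m.+3.
  move=> m; rewrite size_mul ?size_exp_XsubC ?hsP //.
    by rewrite -size_poly_eq0 size_exp_XsubC.
  by rewrite -size_poly_eq0 hsP.
have Khrel : forall k, lfun uh (Q k.+2 * Q k.+2) = alpha k.+2 k * lfun u (P k * P k).
  move=> k; rewrite -Qu // Qh (ortho_lead hmQ hsQ hoQ (n:=k.+2) (p:=('X - c%:P)^+2 * P k)) ?hsz //.
  by rewrite (@coef_top _ _ k.+2 (hmon k) (hsz k)) mul1r.
have hb : forall k, alpha k.+2 k != 0.
  move=> k; have := hKQ k.+2; rewrite Khrel mulf_eq0 negb_or.
  by case/andP.
split.
- move=> n m h; have hmn : (m < n)%N by lia.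
  have := Qu n m hmn; rewrite Qh (ortho_low hmQ hsQ hoQ); last by rewrite hsz; lia.
  move=> e; apply/eqP; move: e => /esym/eqP; rewrite mulf_eq0.
  by rewrite (negbTE (hKP m)) orbF.
- case=> [|[|k]] // _.
  have -> : (k.+2 - 2 = k)%N by lia.
  exact: hb.
- exact: Q0.
have Krel : forall n, lfun u (P n.+1 * P n.+1) = a n.+1 * lfun u (P n * P n).
  move=> n; have := congr1 (fun q => lfun u (P n * q)) (recP n.+1).
  have ne2 : n != n.+2 by lia.
  have ne1 : n != n.+1 by lia.
  rewrite /= !mulrDr !lfunD -!scalerAr !lfunZ (hoP _ _ ne2) (hoP _ _ ne1).
  have -> : P n * ('X * P n.+1) = P n.+1 * ('X * P n) by ring.
  rewrite (ortho_lead hmP hsP hoP (n:=n.+1) (p:='X * P n)); last first.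
    by rewrite sizeXM ?monic_neq0 // hsP.
  rewrite coefXM /= (coef_top (hmP n) (hsP n)) mul1r => ->.
  by rewrite mulr0 !add0r.
have K0 : lfun u (P 0%N * P 0%N) = u 0%N by rewrite P0 mulr1 lfun1.
have Kh0 : lfun uh (Q 0%N * Q 0%N) = uh 0%N by rewrite Q0 mulr1 lfun1.
have uh0 : uh 0%N != 0 by rewrite -Kh0.
pose q := (Q 1%N)`_0.
have Q1e : Q 1%N = 'X + q%:P.
  have hs : (size (Q 1%N - 'X)%R <= 1)%N.
    apply: size_drop_top.
      by rewrite (leq_trans (size_polyD _ _)) // geq_max hsQ size_polyN size_polyX.
    by rewrite coefB coefX (coef_top (hmQ 1%N) (hsQ 1%N)) subrr.
  have := size1_polyC hs; rewrite coefB coefX subr0 => <-.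
  by rewrite addrC subrK.
have uh1e : uh 1%N = - (q * uh 0%N).
  have := hoQ 1%N 0%N isT; rewrite Q0 mulr1 Q1e lfunD lfunX lfunC => /eqP.
  by rewrite addr_eq0 => /eqP.
have Kh1 : lfun uh (Q 1%N * Q 1%N) = uh 2%N + q * uh 1%N.
  rewrite {1}Q1e mulrDl {1}Q1e mulrDr !lfunD -expr2 lfunXn mulrC lfunCM lfunX.
  rewrite lfunCM Q1e lfunD lfunX lfunC uh1e; ring.
have u0e : u 0%N = uh 2%N - 2 * c * uh 1%N + c ^+ 2 * uh 0%N.
  rewrite -lfun1 hu.
  have -> : ('X - c%:P) ^+ 2 * 1 = 'X * 'X - (c%:P * 'X + c%:P * 'X) + c%:P * (c%:P * 1) by ring.
  rewrite lfunD lfunB lfunD !lfunCM -expr2 lfunXn lfunX lfun1; ring.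
have DKh1 : u 0%N * uh 0%N - (uh 1%N - c * uh 0%N) ^+ 2 = lfun uh (Q 1%N * Q 1%N) * uh 0%N.
  by rewrite Kh1 u0e uh1e; ring.
have prevz : forall (S : nat -> {poly R[i]}) n j, (forall k, size (S k) = k.+1) ->
    (n <= j)%N -> (prevP S n)`_j = 0.
  move=> S [|k] j hS hj /=; first by rewrite coef0.
  by rewrite nth_default // hS.
have bP : forall n, b n = ('X * P n)`_n - (P n.+1)`_n.
  move=> n; have := congr1 (fun p : {poly R[i]} => p`_n) (recP n).
  rewrite /= !coefD !coefZ (coef_top (hmP n) (hsP n)) (prevz P n n hsP) // => ->; ring.
have coefQ : forall k, (Q k.+1)`_k = (P k.+1)`_k + alpha k.+1 k.
  move=> k; rewrite hQ coefD coef_sum big_ord_recr /= coefZ (coef_top (hmP k) (hsP k)) mulr1.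
  rewrite big1 ?add0r // => i _; rewrite coefZ nth_default ?mulr0 // hsP; exact: ltn_ord.
have hbe : forall n, ('X * Q n)`_n - (Q n.+1)`_n = hat_b b alpha n.
  rewrite /hat_b => [[|k]]; rewrite bP !coefXM /= !coefQ; ring.
have haK : forall j, hat_a u uh c a alpha j.+1 * lfun uh (Q j * Q j) = lfun uh (Q j.+1 * Q j.+1).
  case=> [|[|k]].
  - by rewrite /hat_a /= DKh1 Kh0; field.
  - by rewrite /hat_a /= DKh1 (Khrel 0%N) K0; field; rewrite uh0 hKQ.
  - by rewrite /hat_a /= (Khrel k.+1) (Khrel k) Krel; field; exact: hb.
move=> n; apply/eqP; rewrite -subr_eq0; apply/eqP.
apply: (ortho_unique hmQ hsQ hoQ hKQ (N:=n)).
- apply/leq_sizeP => j hj.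
  rewrite !coefB !coefD !coefZ (prevz Q n j hsQ hj) mulr0 addr0.
  have [->|hjn] := eqVneq j n.
    by rewrite (coef_top (hmQ n) (hsQ n)) mulr1 -hbe; ring.
  have [->|hjn1] := eqVneq j n.+1.
    rewrite coefXM /= (coef_top (hmQ n) (hsQ n)) (coef_top (hmQ n.+1) (hsQ n.+1)).
    by rewrite [(Q n)`_n.+1]nth_default ?hsQ // mulr0 addr0 subrr.
  have j0 : j != 0%N by lia.
  have z1 : (Q n)`_j.-1 = 0 by rewrite nth_default // hsQ; lia.
  have z2 : (Q n.+1)`_j = 0 by rewrite nth_default // hsQ; lia.
  have z3 : (Q n)`_j = 0 by rewrite nth_default // hsQ; lia.
  by rewrite coefXM (negbTE j0) z1 z2 z3 mulr0 addr0 subrr.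
- move=> j hj.
  rewrite mulrBr !mulrDr lfunB !lfunD -!scalerAr !lfunZ.
  have ne1 : j != n.+1 by lia.
  have ne0 : j != n by lia.
  rewrite (hoQ _ _ ne1) (hoQ _ _ ne0) mulr0 addr0 add0r.
  have -> : Q j * ('X * Q n) = Q n * ('X * Q j) by ring.
  have [e|hjn] := eqVneq j.+1 n.
    subst n; change (prevP Q j.+1) with (Q j).
    rewrite (ortho_lead hmQ hsQ hoQ (n:=j.+1) (p:='X * Q j)); last first.
      by rewrite sizeXM ?monic_neq0 // hsQ.
    by rewrite coefXM /= (coef_top (hmQ j) (hsQ j)) mul1r haK subrr.
  rewrite (ortho_low hmQ hsQ hoQ (n:=n) (p:='X * Q j)); last first.
    rewrite sizeXM ?monic_neq0 // hsQ; lia.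
  destruct n as [|k]; first by rewrite ltn0 in hj.
  change (prevP Q k.+1) with (Q k).
  have nek : j != k by lia.
  by rewrite (hoQ _ _ nek) mulr0 subr0.
Qed.
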